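(* (i) There exists a regular curve in $\mathbb{E}^4$ which admits a generalized Bishop frame of type C but does not admit a generalized Bishop frame of type D. (ii) There exists a regular curve in $\mathbb{E}^4$ which does not admit a generalized Bishop frame of type C.
   Context: A regular curve $\gamma: I\to\mathbb{E}^4$ ($I$ an open interval) is considered with arc-length parametrization; $\mathbb{T}=\gamma'$ is its unit tangent vector. A frame on $\gamma$ is an ordered orthonormal frame $(\mathbb{T},\mathbb{Z}_1,\mathbb{Z}_2,\mathbb{Z}_3)$ of smooth vector fields along $\gamma$ whose first vector is $\mathbb{T}$; it is identified with the smooth map $\mathbb{Z}: I\to O(4)$ whose rows are these vectors. Its coefficient matrix is the $\mathfrak{o}(4)$-valued function $X$ with $\mathbb{Z}'=X\mathbb{Z}$. A frame is of type B, C, D, F respectively if, after possibly permuting $\mathbb{Z}_1,\mathbb{Z}_2,\mathbb{Z}_3$ (keeping $\mathbb{T}$ first), its coefficient matrix has the respective form, for some smooth functions $x_1,x_2,x_3$ (no sign conditions): Type B: $\begin{pmatrix}0&x_1&x_2&x_3\\-x_1&0&0&0\\-x_2&0&0&0\\-x_3&0&0&0\end{pmatrix}$; Type C: $\begin{pmatrix}0&x_1&x_2&0\\-x_1&0&0&x_3\\-x_2&0&0&0\\0&-x_3&0&0\end{pmatrix}$; Type D: $\begin{pmatrix}0&x_1&0&0\\-x_1&0&x_2&x_3\\0&-x_2&0&0\\0&-x_3&0&0\end{pmatrix}$; Type F: $\begin{pmatrix}0&x_1&0&0\\-x_1&0&x_2&0\\0&-x_2&0&x_3\\0&0&-x_3&0\end{pmatrix}$.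 A curve admits a frame of a given type if such a frame exists along it. *)

(* Defs.v *)
From Stdlib Require Import Reals Lra.
From Coquelicot Require Import Coquelicot.
Open Scope R_scope.

Definition in_I (a b : Rbar) (t : R) : Prop := Rbar_lt a t /\ Rbar_lt t b.

Definition smooth_on (a b : Rbar) (f : R -> R) : Prop :=
  forall (n : nat) (t : R), in_I a b t -> ex_derive_n f n t.

Definition sum4 (f : nat -> R) : R := f 0%nat + f 1%nat + f 2%nat + f 3%nat.

(* A curve in E^4: gamma k t is the k-th coordinate (k < 4) of gamma(t). *)
Definition curve := nat -> R -> R.

(* Regular curve with arc-length parametrization on (a,b). *)
Definition unit_speed_curve (a b : Rbar) (gamma : curve) : Prop :=
  (forall k, (k < 4)%nat -> smooth_on a b (gamma k)) /\
  (forall t, in_I a b t -> sum4 (fun k => (Derive (gamma k) t) ^ 2) = 1).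

(* A moving frame: Z i k t is the k-th coordinate of the i-th vector
   (i = 0 : T, i = 1,2,3 : Z_1, Z_2, Z_3); i.e. the matrix with these rows. *)
Definition frame_map := nat -> nat -> R -> R.

Definition is_frame (a b : Rbar) (gamma : curve) (Z : frame_map) : Prop :=
  (forall i k, (i < 4)%nat -> (k < 4)%nat -> smooth_on a b (Z i k)) /\
  (forall t, in_I a b t -> forall i j, (i < 4)%nat -> (j < 4)%nat ->
     sum4 (fun k => Z i k t * Z j k t) = if Nat.eqb i j then 1 else 0) /\
  (forall t, in_I a b t -> forall k, (k < 4)%nat -> Z 0%nat k t = Derive (gamma k) t).

Definition matB (x1 x2 x3 : R) (i j : nat) : R :=
  match i, j with
  | O, S O => x1 | O, S (S O) => x2 | O, S (S (S O)) => x3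
  | S O, O => - x1 | S (S O), O => - x2 | S (S (S O)), O => - x3
  | _, _ => 0 end.

Definition matC (x1 x2 x3 : R) (i j : nat) : R :=
  match i, j with
  | O, S O => x1 | O, S (S O) => x2
  | S O, O => - x1 | S (S O), O => - x2
  | S O, S (S (S O)) => x3 | S (S (S O)), S O => - x3
  | _, _ => 0 end.

Definition matD (x1 x2 x3 : R) (i j : nat) : R :=
  match i, j with
  | O, S O => x1 | S O, O => - x1
  | S O, S (S O) => x2 | S (S O), S O => - x2
  | S O, S (S (S O)) => x3 | S (S (S O)), S O => - x3
  | _, _ => 0 end.

Definition matF (x1 x2 x3 : R) (i j : nat) : R :=
  match i, j with
  | O, S O => x1 | S O, O => - x1
  | S O, S (S O) => x2 | S (S O), S O => - x2
  | S (S O), S (S (S O)) => x3 | S (S (S O)), S (S O) => - x3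
  | _, _ => 0 end.

Definition perm123 (p : nat -> nat) : Prop :=
  p 0%nat = 0%nat /\
  (forall i, (1 <= i <= 3)%nat -> (1 <= p i <= 3)%nat) /\
  (forall i j, (i <= 3)%nat -> (j <= 3)%nat -> p i = p j -> i = j).

(* Z has type M: after permuting Z_1, Z_2, Z_3 by p, the coefficient matrix X
   (defined by Z' = X Z) has the pattern M x1 x2 x3 for smooth x1, x2, x3. *)
Definition frame_of_type (M : R -> R -> R -> nat -> nat -> R)
    (a b : Rbar) (Z : frame_map) : Prop :=
  exists p : nat -> nat, perm123 p /\
  exists x1 x2 x3 : R -> R,
    smooth_on a b x1 /\ smooth_on a b x2 /\ smooth_on a b x3 /\
    forall t, in_I a b t -> forall i k, (i < 4)%nat -> (k < 4)%nat ->
      Derive (Z (p i) k) t =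
        sum4 (fun j => M (x1 t) (x2 t) (x3 t) i j * Z (p j) k t).

Definition admits_frame_of_type (M : R -> R -> R -> nat -> nat -> R)
    (a b : Rbar) (gamma : curve) : Prop :=
  exists Z : frame_map, is_frame a b gamma Z /\ frame_of_type M a b Z.

(* Main.v *)
Require Import Defs.
From Stdlib Require Import Reals.
From Coquelicot Require Import Coquelicot.
From Stdlib Require Import Lra Lia FunctionalExtensionality.
Open Scope R_scope.

Lemma isd_const c t : is_derive (fun _ : R => c) t 0. Proof. exact (is_derive_const c t). Qed.
Lemma isd_id t : is_derive (fun x : R => x) t 1. Proof. exact (is_derive_id t). Qed.
Lemma isd_plus f g t a b : is_derive f t a -> is_derive g t b -> is_derive (fun x => f x + g x) t (a + b).
Proof. intros; exact (is_derive_plus f g t a b H H0). Qed.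
Lemma isd_opp f t a : is_derive f t a -> is_derive (fun x => - f x) t (- a).
Proof. intros; exact (is_derive_opp f t a H). Qed.
Lemma isd_mult f g t a b : is_derive f t a -> is_derive g t b -> is_derive (fun x => f x * g x) t (a * g t + f t * b).
Proof. intros; apply (is_derive_mult f g t a b H H0). intros; apply Rmult_comm. Qed.
Lemma isd_comp f g t a b : is_derive f (g t) a -> is_derive g t b -> is_derive (fun x => f (g x)) t (a * b).
Proof. intros. rewrite Rmult_comm. exact (is_derive_comp f g t a b H H0). Qed.
Lemma isd_eq (f : R -> R) (t a b : R) : is_derive f t a -> a = b -> is_derive f t b.
Proof. intros H ->; auto. Qed.

Fixpoint Dn (n : nat) (f : R -> R) : Prop :=
  match n with O => True | S m => (forall t, ex_derive f t) /\ Dn m (Derive f) end.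

Lemma Dn_intro n f df : (forall t, is_derive f t (df t)) -> Dn n df -> Dn (S n) f.
Proof.
  intros H1 H2. split. intros t; eexists; apply H1.
  replace (Derive f) with df; auto.
  apply functional_extensionality; intros t; symmetry; apply is_derive_unique; auto.
Qed.

Lemma Dn_weak : forall n f, Dn (S n) f -> Dn n f.
Proof.
  induction n; simpl; intros f [H1 H2]; auto.
Qed.

Lemma Dn_ext n f g : (forall x, f x = g x) -> Dn n f -> Dn n g.
Proof.
  intros H; replace g with f; auto; apply functional_extensionality; auto.
Qed.

Lemma Dn_const : forall n c, Dn n (fun _ => c).
Proof.
  induction n; simpl; auto. intros c.
  apply (Dn_intro n _ (fun _ => 0)); auto. intros t; apply isd_const.
Qed.

Lemma Dn_id : forall n, Dn n (fun x => x).
Proof.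
  destruct n; simpl; auto.
  apply (Dn_intro n _ (fun _ => 1)). intros; apply isd_id. apply Dn_const.
Qed.

Lemma Dn_plus : forall n f g, Dn n f -> Dn n g -> Dn n (fun x => f x + g x).
Proof.
  induction n; simpl; auto. intros f g [F1 F2] [G1 G2].
  apply (Dn_intro n _ (fun x => Derive f x + Derive g x)); auto.
  intros t; apply isd_plus; apply Derive_correct; auto.
Qed.

Lemma Dn_opp : forall n f, Dn n f -> Dn n (fun x => - f x).
Proof.
  induction n; simpl; auto. intros f [F1 F2].
  apply (Dn_intro n _ (fun x => - Derive f x)); auto.
  intros t; apply isd_opp; apply Derive_correct; auto.
Qed.

Lemma Dn_mult : forall n f g, Dn n f -> Dn n g -> Dn n (fun x => f x * g x).
Proof.
  induction n; simpl; auto. intros f g [F1 F2] [G1 G2].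
  apply (Dn_intro n _ (fun x => Derive f x * g x + f x * Derive g x)); auto.
  intros t; apply isd_mult; apply Derive_correct; auto.
  apply Dn_plus; apply IHn; auto; apply Dn_weak; split; auto.
Qed.

Lemma Dn_cos_sin : forall n f, Dn n f -> Dn n (fun x => cos (f x)) /\ Dn n (fun x => sin (f x)).
Proof.
  induction n; simpl; auto. intros f [F1 F2].
  assert (IH := IHn f (Dn_weak n f (conj F1 F2))). destruct IH as [C S].
  split.
  - apply (Dn_intro n _ (fun x => - sin (f x) * Derive f x)).
    intros t. apply isd_comp. apply is_derive_cos. apply Derive_correct; auto.
    apply Dn_mult; auto. apply Dn_opp; auto.
  - apply (Dn_intro n _ (fun x => cos (f x) * Derive f x)).
    intros t. apply isd_comp. apply is_derive_sin. apply Derive_correct; auto.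
    apply Dn_mult; auto.
Qed.

Definition sm f := forall n, Dn n f.

Lemma Dn_affine : forall n f a b, sm f -> Dn n (fun x => f (a * x + b)).
Proof.
  induction n; simpl; auto. intros f a b Hf.
  destruct (Hf 1%nat) as [F1 _].
  apply (Dn_intro n _ (fun x => Derive f (a * x + b) * a)).
  intros t. apply isd_comp. apply Derive_correct; auto.
  apply (isd_eq _ _ (a * 1 + 0)). apply isd_plus. 
  apply (isd_eq _ _ (0 * t + a * 1)). apply isd_mult. apply isd_const. apply isd_id. ring.
  apply isd_const. ring.
  apply Dn_mult. apply IHn. intros m. destruct (Hf (S m)); auto. apply Dn_const.
Qed.

Lemma sm_plus f g : sm f -> sm g -> sm (fun x => f x + g x). Proof. intros A B n; apply Dn_plus; auto. Qed.
Lemma sm_opp f : sm f -> sm (fun x => - f x). Proof. intros A n; apply Dn_opp; auto. Qed.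
Lemma sm_mult f g : sm f -> sm g -> sm (fun x => f x * g x). Proof. intros A B n; apply Dn_mult; auto. Qed.
Lemma sm_const c : sm (fun _ => c). Proof. intros n; apply Dn_const. Qed.
Lemma sm_cos f : sm f -> sm (fun x => cos (f x)). Proof. intros A n; apply Dn_cos_sin; auto. Qed.
Lemma sm_sin f : sm f -> sm (fun x => sin (f x)). Proof. intros A n; apply Dn_cos_sin; auto. Qed.
Lemma sm_affine f a b : sm f -> sm (fun x => f (a * x + b)). Proof. intros A n; apply Dn_affine; auto. Qed.
Lemma sm_ext f g : (forall x, f x = g x) -> sm f -> sm g. Proof. intros H A n; apply (Dn_ext n f g); auto. Qed.
Lemma sm_deriv f : sm f -> sm (Derive f). Proof. intros A n. apply (A (S n)). Qed.
Lemma sm_ex_derive f t : sm f -> ex_derive f t. Proof. intros A. apply (A 1%nat). Qed.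

Lemma Derive_n_S : forall n f x, Derive_n f (S n) x = Derive_n (Derive f) n x.
Proof.
  induction n; intros f x; simpl; auto.
  apply Derive_ext. intros; rewrite <- IHn; reflexivity.
Qed.

Lemma sm_smooth f a b : sm f -> smooth_on a b f.
Proof.
  intros A n. revert f A. induction n; intros f A t Ht; simpl; auto.
  destruct n. simpl. apply sm_ex_derive; auto.
  apply (ex_derive_ext (Derive_n (Derive f) n)).
  intros; symmetry; apply Derive_n_S.
  apply (IHn (Derive f) (sm_deriv f A) t); auto.
Qed.

Definition h (n : nat) (t : R) : R :=
  if Rlt_dec 0 t then exp (- / t) * (/ t) ^ n else 0.

Lemma exp_pow_INR : forall m y, exp y ^ m = exp (INR m * y).
Proof.
  induction m; intros y. simpl. rewrite Rmult_0_l, exp_0. reflexivity.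
  rewrite S_INR. simpl pow. rewrite IHm. rewrite <- exp_plus. f_equal. ring.
Qed.

Lemma exp_bound (m : nat) (y : R) : 0 < y -> exp (- / y) <= (INR (S m) * y) ^ (S m).
Proof.
  intros Hy. set (M := INR (S m)).
  assert (HM : 0 < M) by (apply lt_0_INR; lia).
  assert (E : exp (/ y) = exp (/ (M * y)) ^ (S m)).
  { rewrite exp_pow_INR. f_equal. fold M. field. lra. }
  assert (L : / (M * y) <= exp (/ (M * y))).
  { generalize (exp_ineq1_le (/ (M*y))); lra. }
  assert (P : 0 < / (M*y)) by (apply Rinv_0_lt_compat; nra).
  assert (L2 : (/ (M*y)) ^ S m <= exp (/ y)).
  { rewrite E. apply pow_incr. lra. }
  rewrite exp_Ropp.
  replace ((M * y) ^ S m) with (/ ((/ (M*y)) ^ S m)).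
  apply Rinv_le_contravar. apply pow_lt; auto. auto.
  rewrite pow_inv. rewrite Rinv_inv. reflexivity.
Qed.

Lemma h_deriv0 n : is_derive (h n) 0 0.
Proof.
  apply is_derive_Reals. intros eps Heps.
  set (M := INR (S (S n))).
  assert (HM : 0 < M) by (apply lt_0_INR; lia).
  assert (HMm : 0 < M ^ S (S n)) by (apply pow_lt; auto).
  exists (mkposreal (eps / M ^ S (S n)) (Rdiv_lt_0_compat _ _ Heps HMm)).
  intros x Hx0 Hx. simpl in Hx.
  unfold h. rewrite Rplus_0_l.
  destruct (Rlt_dec 0 0) as [F|_]; [lra|].
  destruct (Rlt_dec 0 x) as [Hp|Hn].
  - rewrite Rabs_pos_eq in Hx by lra.
    assert (B := exp_bound (S n) x Hp). fold M in B.
    assert (Ex : 0 < exp (- / x)) by apply exp_pos.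
    assert (Q : (exp (- / x) * (/ x) ^ n - 0) / x - 0 = exp (- / x) * (/ x) ^ (S n)).
    { simpl. field. lra. }
    rewrite Q. rewrite Rabs_pos_eq.
    2:{ apply Rmult_le_pos; try lra. apply pow_le. left; apply Rinv_0_lt_compat; auto. }
    apply Rle_lt_trans with ((M * x) ^ S (S n) * (/ x) ^ S n).
    apply Rmult_le_compat_r; auto. apply pow_le. left; apply Rinv_0_lt_compat; auto.
    replace ((M * x) ^ S (S n) * (/ x) ^ S n) with (M ^ S (S n) * x).
    2:{ rewrite Rpow_mult_distr. rewrite pow_inv. simpl pow. field. split; try lra.
        apply pow_nonzero; lra. }
    apply Rlt_le_trans with (M ^ S (S n) * (eps / M ^ S (S n))).
    apply Rmult_lt_compat_l; auto. right; field; lra.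
  - replace ((0 - 0) / x - 0) with 0 by (field; auto). rewrite Rabs_R0; auto.
Qed.

Lemma h_deriv n t : is_derive (h n) t (h (S (S n)) t - INR n * h (S n) t).
Proof.
  destruct (Rlt_dec 0 t) as [Hp|Hn].
  - apply (is_derive_ext_loc (fun x => exp (- / x) * (/ x) ^ n)).
    apply (locally_open (fun u => 0 < u)). apply open_gt.
    intros x Hx; unfold h; destruct (Rlt_dec 0 x); [reflexivity| lra]. auto.
    unfold h; destruct (Rlt_dec 0 t); [|lra].
    auto_derive. lra.
    destruct n. simpl. field. lra.
    simpl pred. rewrite S_INR. simpl pow. field. lra.
  - destruct (Rtotal_order t 0) as [Hl|[He|Hg]]; [|subst t| lra].
    + apply (is_derive_ext_loc (fun _ => 0)).
      apply (locally_open (fun u => u < 0)). apply open_lt.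
      intros x Hx; unfold h; destruct (Rlt_dec 0 x); [lra| reflexivity]. auto.
      unfold h; destruct (Rlt_dec 0 t); [lra|].
      replace (0 - INR n * 0) with 0 by ring. apply isd_const.
    + unfold h at 2 3; destruct (Rlt_dec 0 0); [lra|].
      replace (0 - INR n * 0) with 0 by ring. apply h_deriv0.
Qed.

Lemma Dn_h : forall k n, Dn k (h n).
Proof.
  induction k; simpl; auto. intros n.
  apply (Dn_intro k _ (fun t => h (S (S n)) t - INR n * h (S n) t)).
  apply h_deriv.
  apply Dn_plus. auto. apply Dn_opp. apply Dn_mult. apply Dn_const. auto.
Qed.

Lemma sm_h n : sm (h n).
Proof. intros k; apply Dn_h. Qed.

Definition g (t : R) : R := h 0 t.

Lemma g_deriv t : is_derive g t (h 2 t).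
Proof. apply (isd_eq _ _ _ _ (h_deriv 0 t)). simpl; ring. Qed.

Lemma g_zero t : t <= 0 -> g t = 0.
Proof. intros; unfold g, h; destruct (Rlt_dec 0 t); [lra|auto]. Qed.
Lemma h_zero n t : t <= 0 -> h n t = 0.
Proof. intros; unfold h; destruct (Rlt_dec 0 t); [lra|auto]. Qed.
Lemma h_pos n t : 0 < t -> 0 < h n t.
Proof. intros; unfold h; destruct (Rlt_dec 0 t); [|lra].
  apply Rmult_lt_0_compat. apply exp_pos. apply pow_lt. apply Rinv_0_lt_compat; auto. Qed.
Lemma h2_g t : 0 < t -> h 2 t = g t / (t * t).
Proof. intros; unfold g, h; destruct (Rlt_dec 0 t); [|lra]. simpl. field. lra. Qed.

Lemma sm_cont f t : sm f -> continuous f t.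
Proof. intros A. apply (@ex_derive_continuous R_AbsRing R_NormedModule). apply sm_ex_derive; auto. Qed.

Lemma RInt_deriv f t : sm f -> is_derive (fun x => RInt f 0 x) t (f t).
Proof.
  intros A. apply (is_derive_RInt f _ 0).
  apply filter_forall. intros b. apply (@RInt_correct R_CompleteNormedModule). apply (@ex_RInt_continuous R_CompleteNormedModule).
  intros; apply sm_cont; auto.
  apply sm_cont; auto.
Qed.

Lemma sm_RInt f : sm f -> sm (fun x => RInt f 0 x).
Proof.
  intros A n. destruct n; simpl; auto.
  apply (Dn_intro n _ f). intros; apply RInt_deriv; auto. apply A.
Qed.

Lemma Derive_RInt0 f t : sm f -> Derive (fun x => RInt f 0 x) t = f t.
Proof. intros; apply is_derive_unique; apply RInt_deriv; auto. Qed.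

Definition v4 (a b c d : R) (k : nat) : R :=
  match k with 0%nat => a | 1%nat => b | 2%nat => c | _ => d end.

Lemma unit_speed_RInt (T : nat -> R -> R) :
  (forall k, sm (T k)) -> (forall t, sum4 (fun k => T k t ^ 2) = 1) ->
  unit_speed_curve m_infty p_infty (fun k x => RInt (T k) 0 x).
Proof.
  intros A B. split.
  - intros k _. apply sm_smooth. apply sm_RInt; auto.
  - intros t _. rewrite <- (B t). unfold sum4. rewrite !Derive_RInt0; auto.
Qed.

Lemma all_I t : in_I m_infty p_infty t.
Proof. split; simpl; auto. Qed.

Lemma Dg x : Derive (fun y => g y) x = h 2 x.
Proof. apply is_derive_unique. apply g_deriv. Qed.
Lemma exg x : ex_derive (fun y => g y) x.
Proof. eexists; apply g_deriv. Qed.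
Lemma sm_g : sm g.
Proof. apply sm_h. Qed.

Ltac exgs := repeat split; try apply exg.

Lemma sc_id a : sin a ^ 2 + cos a ^ 2 = 1.
Proof. generalize (sin2_cos2 a); unfold Rsqr; intros; nra. Qed.

Definition T1 (k : nat) (t : R) : R :=
  v4 (cos (g (-1 * t + 0)) + cos (g t) - 1) (sin (g (-1 * t + 0))) (sin (g t)) 0 k.

Definition Z1 (i k : nat) (t : R) : R :=
  match i with
  | 0%nat => T1 k t
  | 1%nat => v4 (- sin (g (-1 * t + 0))) (cos (g (-1 * t + 0))) 0 0 k
  | 2%nat => v4 (- sin (g t)) 0 (cos (g t)) 0 k
  | _ => v4 0 0 0 1 k end.

Lemma zeros_neg t : t <= 0 -> g t = 0 /\ h 2 t = 0.
Proof. intros; split; [apply g_zero|apply h_zero]; auto. Qed.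

Lemma sm_Z1 i k : sm (Z1 i k).
Proof.
  assert (G1 : sm (fun t => g (-1 * t + 0))) by (apply sm_affine; apply sm_g).
  assert (G2 := sm_g).
  destruct i as [|[|[|i]]]; destruct k as [|[|[|k]]]; simpl;
  repeat first [ apply sm_plus | apply sm_opp | apply sm_cos | apply sm_sin | apply sm_const | apply sm_mult ];
  try apply sm_const; auto.
  all: try (apply (sm_ext (fun t => cos (g (-1*t+0)) + cos (g t) + (-1)));
   [intros; ring| repeat first [ apply sm_plus | apply sm_cos | apply sm_const]; auto]).
  all: first [apply (sm_ext (fun _ => 0)); [intros; reflexivity|apply sm_const]
             | apply (sm_ext (fun _ => 1)); [intros; reflexivity|apply sm_const]].
Qed.

Definition gamma1 : curve := fun k x => RInt (T1 k) 0 x.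

Lemma T1_unit t : sum4 (fun k => T1 k t ^ 2) = 1.
Proof.
  unfold sum4, T1, v4.
  destruct (Rle_or_lt t 0) as [Ht|Ht].
  - destruct (zeros_neg t Ht) as [E1 E2]. rewrite E1, sin_0, cos_0.
    generalize (sc_id (g (-1*t+0))); intros; nra.
  - assert (H : -1*t+0 <= 0) by lra. destruct (zeros_neg _ H) as [E1 E2]. rewrite E1, sin_0, cos_0.
    generalize (sc_id (g t)); intros; nra.
Qed.

Lemma is_frame1 : is_frame m_infty p_infty gamma1 Z1.
Proof.
  split; [|split].
  - intros i k _ _; apply sm_smooth; apply sm_Z1.
  - intros t _ i j Hi Hj.
    destruct (Rle_or_lt t 0) as [Ht|Ht].
    + destruct (zeros_neg t Ht) as [E1 E2].
      generalize (sc_id (g (-1*t+0))); intros.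
      destruct i as [|[|[|[|i]]]]; try lia; destruct j as [|[|[|[|j]]]]; try lia;
      unfold sum4, Z1, T1, v4; simpl; rewrite ?E1, ?sin_0, ?cos_0; nra.
    + assert (H : -1*t+0 <= 0) by lra. destruct (zeros_neg _ H) as [E1 E2].
      generalize (sc_id (g t)); intros.
      destruct i as [|[|[|[|i]]]]; try lia; destruct j as [|[|[|[|j]]]]; try lia;
      unfold sum4, Z1, T1, v4; simpl; rewrite ?E1, ?sin_0, ?cos_0; nra.
  - intros t _ k _. unfold gamma1. rewrite Derive_RInt0. reflexivity.
    apply (sm_Z1 0 k).
Qed.

Lemma perm_id : perm123 (fun i => i).
Proof. split; [reflexivity| split]; intros; auto. Qed.

Lemma type1 : frame_of_type matC m_infty p_infty Z1.
Proof.
  exists (fun i => i). split. apply perm_id.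
  exists (fun t => h 2 (-1*t+0) * -1), (h 2), (fun _ => 0).
  split. apply sm_smooth. apply sm_mult. apply sm_affine, sm_h. apply sm_const.
  split. apply sm_smooth. apply sm_h. split. apply sm_smooth, sm_const.
  intros t _ i k Hi Hk.
  apply is_derive_unique.
  destruct (Rle_or_lt t 0) as [Ht|Ht].
  + destruct (zeros_neg t Ht) as [E1 E2].
    destruct i as [|[|[|[|i]]]]; try lia; destruct k as [|[|[|[|k]]]]; try lia;
    unfold sum4, Z1, T1, v4, matC; simpl; auto_derive; exgs; rewrite ?Dg, ?E1, ?E2, ?sin_0, ?cos_0; ring.
  + assert (H : -1*t+0 <= 0) by lra. destruct (zeros_neg _ H) as [E1 E2].
    destruct i as [|[|[|[|i]]]]; try lia; destruct k as [|[|[|[|k]]]]; try lia;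
    unfold sum4, Z1, T1, v4, matC; simpl; auto_derive; exgs; rewrite ?Dg, ?E1, ?E2, ?sin_0, ?cos_0; ring.
Qed.

Lemma part1_admits : admits_frame_of_type matC m_infty p_infty gamma1.
Proof. exists Z1. split. apply is_frame1. apply type1. Qed.

Lemma ballR (x y e : R) : Rabs (y - x) < e -> ball x e y.
Proof. intros H. exact H. Qed.

Lemma cont_zero_side (f : R -> R) (t0 a b : R) :
  continuous f t0 -> a < b -> (t0 = a \/ t0 = b) ->
  (forall t, a < t < b -> f t = 0) -> f t0 = 0.
Proof.
  intros Hc Hab Hend Hz.
  destruct (Req_dec (f t0) 0) as [E|NE]; auto. exfalso.
  assert (Hp : 0 < Rabs (f t0)) by (apply Rabs_pos_lt; auto).
  destruct (proj1 (filterlim_locally f (f t0)) Hc (mkposreal _ Hp)) as [d Hd].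
  set (e := Rmin (d/2) ((b - a)/2)).
  assert (He : 0 < e) by (unfold e; apply Rmin_glb_lt; destruct d; simpl; lra).
  assert (He1 : e <= d/2) by apply Rmin_l.
  assert (He2 : e <= (b-a)/2) by apply Rmin_r.
  destruct d as [d dpos]; simpl in *.
  destruct Hend as [->| ->].
  - assert (B := Hd (a + e)). 
    assert (Hb : ball a d (a + e)) by (apply ballR; rewrite Rabs_pos_eq; lra).
    specialize (B Hb). rewrite (Hz (a+e)) in B by lra.
    unfold ball in B; simpl in B; unfold AbsRing_ball, abs, minus, plus, opp in B; simpl in B.
    rewrite Rplus_0_l, Rabs_Ropp in B. lra.
  - assert (B := Hd (b - e)). 
    assert (Hb : ball b d (b - e)) by (apply ballR; rewrite Rabs_left; lra).
    specialize (B Hb). rewrite (Hz (b-e)) in B by lra.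
    unfold ball in B; simpl in B; unfold AbsRing_ball, abs, minus, plus, opp in B; simpl in B.
    rewrite Rplus_0_l, Rabs_Ropp in B. lra.
Qed.

Lemma perm_lt4 p i : perm123 p -> (i <= 3)%nat -> (p i < 4)%nat.
Proof.
  intros [H0 [H1 _]] Hi. destruct i. rewrite H0; lia.
  assert (1 <= p (S i) <= 3)%nat by (apply H1; lia). lia.
Qed.

Lemma perm_eqb p i j : perm123 p -> (i <= 3)%nat -> (j <= 3)%nat -> Nat.eqb (p i) (p j) = Nat.eqb i j.
Proof.
  intros P Hi Hj. destruct (Nat.eqb_spec i j) as [->|N].
  apply Nat.eqb_refl. apply Nat.eqb_neq. intros E. apply N. destruct P as [_ [_ P]]. apply P; auto.
Qed.

Lemma frame_ortho a b gamma Z p i j t :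
  is_frame a b gamma Z -> perm123 p -> in_I a b t -> (i <= 3)%nat -> (j <= 3)%nat ->
  sum4 (fun k => Z (p i) k t * Z (p j) k t) = if Nat.eqb i j then 1 else 0.
Proof.
  intros [_ [O _]] P Ht Hi Hj. rewrite <- (perm_eqb p i j P Hi Hj).
  apply O; auto; apply perm_lt4; auto.
Qed.

Lemma frame_cont a b gamma Z p i k t :
  is_frame a b gamma Z -> perm123 p -> in_I a b t -> (i <= 3)%nat -> (k < 4)%nat ->
  continuous (Z (p i) k) t.
Proof.
  intros [S _] P Ht Hi Hk. apply (@ex_derive_continuous R_AbsRing R_NormedModule).
  apply (S (p i) k (perm_lt4 p i P Hi) Hk 1%nat t Ht).
Qed.

Lemma frame_T0 (T : nat -> R -> R) Z k :
  (forall k, sm (T k)) -> is_frame m_infty p_infty (fun k x => RInt (T k) 0 x) Z -> (k < 4)%nat ->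
  forall t, Z 0%nat k t = T k t.
Proof.
  intros S [_ [_ H]] Hk t. rewrite (H t (all_I t) k Hk). apply Derive_RInt0; auto.
Qed.

Lemma frame_dT0 (T : nat -> R -> R) Z k t :
  (forall k, sm (T k)) -> is_frame m_infty p_infty (fun k x => RInt (T k) 0 x) Z -> (k < 4)%nat ->
  Derive (Z 0%nat k) t = Derive (T k) t.
Proof.
  intros S F Hk. apply Derive_ext. intros; apply (frame_T0 T Z k S F Hk).
Qed.

Lemma plane_lemma w0 wm c s d :
  s ^ 2 + c ^ 2 = 1 -> d <> 0 -> w0 * c + wm * s = 0 -> w0 * (- s * d) + wm * (c * d) = 0 -> wm = 0.
Proof.
  intros H1 Hd H2 H3.
  assert (H4 : - w0 * s + wm * c = 0).
  { apply (Rmult_eq_reg_r d); auto. rewrite Rmult_0_l. rewrite <- H3. ring. }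
  replace wm with (wm * (s ^ 2 + c ^ 2)) by (rewrite H1; ring).
  replace (wm * (s ^ 2 + c ^ 2)) with (s * (w0 * c + wm * s) + c * (- w0 * s + wm * c)) by ring.
  rewrite H2, H4; ring.
Qed.

Lemma sm_T1 k : sm (T1 k).
Proof. apply (sm_Z1 0 k). Qed.

Lemma dT1_neg t : t < 0 ->
  Derive (T1 0) t = - sin (g (-1*t+0)) * (h 2 (-1*t+0) * -1) /\
  Derive (T1 1) t = cos (g (-1*t+0)) * (h 2 (-1*t+0) * -1) /\
  Derive (T1 2) t = 0 /\ Derive (T1 3) t = 0.
Proof.
  intros Ht. destruct (zeros_neg t (Rlt_le _ _ Ht)) as [E1 E2].
  repeat split; apply is_derive_unique; unfold T1, v4; auto_derive; exgs;
  rewrite ?Dg, ?E1, ?E2, ?sin_0, ?cos_0; ring.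
Qed.

Lemma dT1_pos t : 0 < t ->
  Derive (T1 0) t = - sin (g t) * h 2 t /\
  Derive (T1 1) t = 0 /\
  Derive (T1 2) t = cos (g t) * h 2 t /\ Derive (T1 3) t = 0.
Proof.
  intros Ht. assert (H : -1*t+0 <= 0) by lra. destruct (zeros_neg _ H) as [E1 E2].
  repeat split; apply is_derive_unique; unfold T1, v4; auto_derive; exgs;
  rewrite ?Dg, ?E1, ?E2, ?sin_0, ?cos_0; ring.
Qed.

Lemma part1_notD : ~ admits_frame_of_type matD m_infty p_infty gamma1.
Proof.
  intros [Z [F [p [P [x1 [x2 [x3 [_ [_ [_ EQ]]]]]]]]]].
  assert (P0 : p 0%nat = 0%nat) by (destruct P; auto).
  assert (ZT : forall k t, (k < 4)%nat -> Z (p 0%nat) k t = T1 k t).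
  { intros k t Hk; rewrite P0; apply (frame_T0 T1 Z k sm_T1 F Hk). }
  assert (DT : forall k t, (k < 4)%nat -> Derive (T1 k) t = x1 t * Z (p 1%nat) k t).
  { intros k t Hk. rewrite <- (frame_dT0 T1 Z k t sm_T1 F Hk). rewrite <- P0 at 1.
    rewrite (EQ t (all_I t) 0%nat k ltac:(lia) Hk). unfold sum4, matD; simpl; ring. }
  assert (OA : forall i t, (i = 2 \/ i = 3)%nat -> sum4 (fun k => Z (p i) k t * T1 k t) = 0).
  { intros i t Hi. assert (O := frame_ortho _ _ _ Z p i 0 t F P (all_I t) ltac:(lia) ltac:(lia)).
    destruct Hi as [-> | ->]; simpl in O; rewrite <- O; unfold sum4; rewrite !ZT by lia; reflexivity. }
  assert (OB : forall i t, (i = 2 \/ i = 3)%nat -> sum4 (fun k => Z (p i) k t * Derive (T1 k) t) = 0).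
  { intros i t Hi. unfold sum4. rewrite !DT by lia.
    assert (O := frame_ortho _ _ _ Z p i 1 t F P (all_I t)).
    destruct Hi as [-> | ->]; simpl in O; unfold sum4 in O;
    [ rewrite <- (Rmult_0_r (x1 t)), <- O by lia | rewrite <- (Rmult_0_r (x1 t)), <- O by lia]; ring. }
  assert (L : forall i t, (i = 2 \/ i = 3)%nat -> -1 < t < 0 -> Z (p i) 1%nat t = 0).
  { intros i t Hi Ht. assert (A := OA i t Hi). assert (B := OB i t Hi).
    destruct (dT1_neg t (proj2 Ht)) as [d0 [d1 [d2 d3]]].
    destruct (zeros_neg t (Rlt_le _ _ (proj2 Ht))) as [E1 E2].
    unfold sum4 in A, B. rewrite d0, d1, d2, d3 in B. unfold T1, v4 in A. rewrite E1, sin_0, cos_0 in A.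
    apply (plane_lemma (Z (p i) 0%nat t) _ (cos (g (-1*t+0))) (sin (g (-1*t+0))) (h 2 (-1 * t + 0) * -1)).
    apply sc_id. assert (0 < h 2 (-1*t+0)) by (apply h_pos; lra). nra.
    lra. lra. }
  assert (Rt : forall i t, (i = 2 \/ i = 3)%nat -> 0 < t < 1 -> Z (p i) 2%nat t = 0).
  { intros i t Hi Ht. assert (A := OA i t Hi). assert (B := OB i t Hi).
    destruct (dT1_pos t (proj1 Ht)) as [d0 [d1 [d2 d3]]].
    assert (H : -1*t+0 <= 0) by lra. destruct (zeros_neg _ H) as [E1 E2].
    unfold sum4 in A, B. rewrite d0, d1, d2, d3 in B. unfold T1, v4 in A. rewrite E1, sin_0, cos_0 in A.
    apply (plane_lemma (Z (p i) 0%nat t) _ (cos (g t)) (sin (g t)) (h 2 t)).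
    apply sc_id. assert (0 < h 2 t) by (apply h_pos; lra). lra.
    lra. lra. }
  assert (C1 : forall i, (i = 2 \/ i = 3)%nat -> Z (p i) 1%nat 0 = 0).
  { intros i Hi. apply (cont_zero_side _ 0 (-1) 0). apply (frame_cont _ _ gamma1 Z p i 1 0 F P (all_I 0)); lia.
    lra. auto. intros; apply L; auto. }
  assert (C2 : forall i, (i = 2 \/ i = 3)%nat -> Z (p i) 2%nat 0 = 0).
  { intros i Hi. apply (cont_zero_side _ 0 0 1). apply (frame_cont _ _ gamma1 Z p i 2 0 F P (all_I 0)); lia.
    lra. auto. intros; apply Rt; auto. }
  assert (C0 : forall i, (i = 2 \/ i = 3)%nat -> Z (p i) 0%nat 0 = 0).
  { intros i Hi. assert (A := OA i 0 Hi). unfold sum4, T1, v4 in A.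
    rewrite (g_zero 0) in A by lra. replace (-1*0+0) with 0 in A by ring. rewrite (g_zero 0) in A by lra.
    rewrite sin_0, cos_0 in A. lra. }
  assert (N2 := frame_ortho _ _ _ Z p 2 2 0 F P (all_I 0) ltac:(lia) ltac:(lia)).
  assert (N3 := frame_ortho _ _ _ Z p 3 3 0 F P (all_I 0) ltac:(lia) ltac:(lia)).
  assert (N23 := frame_ortho _ _ _ Z p 2 3 0 F P (all_I 0) ltac:(lia) ltac:(lia)).
  simpl in N2, N3, N23. unfold sum4 in N2, N3, N23.
  rewrite !C0, !C1, !C2 in N2, N3, N23 by lia.
  nra.
Qed.

Lemma g_aff_deriv a b t : is_derive (fun x => g (a * x + b)) t (h 2 (a * t + b) * a).
Proof.
  apply isd_comp. apply g_deriv.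
  apply (isd_eq _ _ (0 * t + a * 1 + 0)). apply isd_plus. apply isd_mult. apply isd_const. apply isd_id.
  apply isd_const. ring.
Qed.

Definition th1 t := g (-1*t+0) + g (1*t + -2).
Definition dth1 t := h 2 (-1*t+0) * -1 + h 2 (1*t + -2) * 1.
Definition thB t := g (1*t+0) * g (-1*t+1).
Definition dthB t := h 2 (1*t+0) * 1 * g (-1*t+1) + g (1*t+0) * (h 2 (-1*t+1) * -1).
Definition thC t := g (1*t + -1) * g (-1*t+2).
Definition dthC t := h 2 (1*t + -1) * 1 * g (-1*t+2) + g (1*t + -1) * (h 2 (-1*t+2) * -1).

Lemma th1_d t : is_derive th1 t (dth1 t).
Proof. apply (isd_plus (fun x => g (_ * x + _)) (fun x => g (_ * x + _))); apply g_aff_deriv. Qed.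
Lemma thB_d t : is_derive thB t (dthB t).
Proof. apply (isd_mult (fun x => g (_ * x + _)) (fun x => g (_ * x + _))); apply g_aff_deriv. Qed.
Lemma thC_d t : is_derive thC t (dthC t).
Proof. apply (isd_mult (fun x => g (_ * x + _)) (fun x => g (_ * x + _))); apply g_aff_deriv. Qed.

Lemma Dth1 t : Derive th1 t = dth1 t. Proof. apply is_derive_unique, th1_d. Qed.
Lemma DthB t : Derive thB t = dthB t. Proof. apply is_derive_unique, thB_d. Qed.
Lemma DthC t : Derive thC t = dthC t. Proof. apply is_derive_unique, thC_d. Qed.
Lemma exth1 t : ex_derive th1 t. Proof. eexists; apply th1_d. Qed.
Lemma exthB t : ex_derive thB t. Proof. eexists; apply thB_d. Qed.
Lemma exthC t : ex_derive thC t. Proof. eexists; apply thC_d. Qed.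

Lemma sm_th1 : sm th1. Proof. apply sm_plus; apply sm_affine, sm_g. Qed.
Lemma sm_thB : sm thB. Proof. apply sm_mult; apply sm_affine, sm_g. Qed.
Lemma sm_thC : sm thC. Proof. apply sm_mult; apply sm_affine, sm_g. Qed.

Definition T2 (k : nat) (t : R) : R :=
  v4 (cos (th1 t) + cos (thB t) + cos (thC t) - 2) (sin (th1 t)) (sin (thB t)) (sin (thC t)) k.

Lemma sm_T2 k : sm (T2 k).
Proof.
  assert (A1 := sm_th1). assert (A2 := sm_thB). assert (A3 := sm_thC).
  destruct k as [|[|[|[|k]]]]; unfold T2, v4.
  - apply (sm_ext (fun t => cos (th1 t) + cos (thB t) + cos (thC t) + - 2)). intros; ring.
    repeat apply sm_plus; try apply sm_cos; auto. apply sm_const.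
  - apply sm_sin; auto.
  - apply sm_sin; auto.
  - apply sm_sin; auto.
  - apply sm_sin; auto.
Qed.

Lemma gz x : x <= 0 -> g x = 0. Proof. apply g_zero. Qed.
Lemma hz x : x <= 0 -> h 2 x = 0. Proof. apply h_zero. Qed.

Ltac zr := repeat match goal with
  | |- context [g ?x] => rewrite (gz x) by lra
  | |- context [h 2 ?x] => rewrite (hz x) by lra end.

Lemma reg1 t : t <= 0 -> th1 t = g (-1*t+0) /\ dth1 t = - h 2 (-1*t+0) /\ thB t = 0 /\ dthB t = 0 /\ thC t = 0 /\ dthC t = 0.
Proof. intros; unfold th1, dth1, thB, dthB, thC, dthC; zr; repeat split; ring. Qed.
Lemma reg2 t : 0 <= t <= 1 -> th1 t = 0 /\ dth1 t = 0 /\ thC t = 0 /\ dthC t = 0.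
Proof. intros; unfold th1, dth1, thB, dthB, thC, dthC; zr; repeat split; ring. Qed.
Lemma reg3 t : 1 <= t <= 2 -> th1 t = 0 /\ dth1 t = 0 /\ thB t = 0 /\ dthB t = 0.
Proof. intros; unfold th1, dth1, thB, dthB, thC, dthC; zr; repeat split; ring. Qed.
Lemma reg4 t : 2 <= t -> th1 t = g (1*t + -2) /\ dth1 t = h 2 (1*t + -2) /\ thB t = 0 /\ dthB t = 0 /\ thC t = 0 /\ dthC t = 0.
Proof. intros; unfold th1, dth1, thB, dthB, thC, dthC; zr; repeat split; ring. Qed.

Lemma T2_unit t : sum4 (fun k => T2 k t ^ 2) = 1.
Proof.
  unfold sum4, T2, v4.
  destruct (Rle_or_lt t 0) as [H1|H1]; [|destruct (Rle_or_lt t 1) as [H2|H2]; [|destruct (Rle_or_lt t 2) as [H3|H3]]].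
  - destruct (reg1 t H1) as [_ [_ [E1 [_ [E2 _]]]]]. rewrite E1, E2, sin_0, cos_0.
    generalize (sc_id (th1 t)); intros; nra.
  - destruct (reg2 t ltac:(lra)) as [E1 [_ [E2 _]]]. rewrite E1, E2, sin_0, cos_0.
    generalize (sc_id (thB t)); intros; nra.
  - destruct (reg3 t ltac:(lra)) as [E1 [_ [E2 _]]]. rewrite E1, E2, sin_0, cos_0.
    generalize (sc_id (thC t)); intros; nra.
  - destruct (reg4 t ltac:(lra)) as [_ [_ [E1 [_ [E2 _]]]]]. rewrite E1, E2, sin_0, cos_0.
    generalize (sc_id (th1 t)); intros; nra.
Qed.

Definition gamma2 : curve := fun k x => RInt (T2 k) 0 x.

Lemma gamma2_unit : unit_speed_curve m_infty p_infty gamma2.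
Proof. apply unit_speed_RInt. apply sm_T2. apply T2_unit. Qed.

Lemma gamma1_unit : unit_speed_curve m_infty p_infty gamma1.
Proof. apply unit_speed_RInt. apply sm_T1. apply T1_unit. Qed.

Lemma dT2 t :
  Derive (T2 0) t = - sin (th1 t) * dth1 t - sin (thB t) * dthB t - sin (thC t) * dthC t /\
  Derive (T2 1) t = cos (th1 t) * dth1 t /\
  Derive (T2 2) t = cos (thB t) * dthB t /\
  Derive (T2 3) t = cos (thC t) * dthC t.
Proof.
  repeat split; apply is_derive_unique; unfold T2, v4; auto_derive;
  repeat split; try apply exth1; try apply exthB; try apply exthC;
  rewrite ?Dth1, ?DthB, ?DthC; ring.
Qed.

Lemma bump_nz u v : 0 < u -> 0 < v -> u + v = 1 -> u <> v ->
  h 2 u * 1 * g v + g u * (h 2 v * -1) <> 0.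
Proof.
  intros Hu Hv Huv Hne E.
  rewrite (h2_g u Hu), (h2_g v Hv) in E.
  assert (A : 0 < g u) by (apply (h_pos 0); auto).
  assert (B : 0 < g v) by (apply (h_pos 0); auto).
  assert (K : g u * g v * (v - u) = (g u / (u * u) * 1 * g v + g u * (g v / (v * v) * -1)) * (u * u * v * v)).
  { replace (v - u) with ((v - u) * (v + u)) by (rewrite Rplus_comm, Huv; ring). field; lra. }
  rewrite E, Rmult_0_l in K.
  assert (0 < g u * g v) by (apply Rmult_lt_0_compat; auto).
  destruct (Rmult_integral _ _ K) as [K1|K1]; lra.
Qed.

Lemma const_on f a b : a < b -> (forall x, ex_derive f x) -> (forall x, a <= x <= b -> Derive f x = 0) -> f a = f b.
Proof.
  intros Hab Hd Hz.
  destruct (MVT_gen f a b (Derive f)) as [c [Hc E]].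
  - intros x _; apply Derive_correct; auto.
  - intros x _. apply continuity_pt_filterlim. apply (@ex_derive_continuous R_AbsRing R_NormedModule); auto.
  - rewrite Rmin_left, Rmax_right in Hc by lra. rewrite Hz in E by lra. lra.
Qed.

Lemma T2_junc t : (t = 0 \/ t = 1 \/ t = 2) -> forall k, T2 k t = v4 1 0 0 0 k.
Proof.
  intros Ht k. unfold T2.
  assert (E : th1 t = 0 /\ thB t = 0 /\ thC t = 0).
  { unfold th1, thB, thC. destruct Ht as [->|[->| ->]]; zr; repeat split; ring. }
  destruct E as [E1 [E2 E3]]. rewrite E1, E2, E3, sin_0, cos_0.
  destruct k as [|[|[|[|k]]]]; simpl; ring.
Qed.

Lemma part2_notC : ~ admits_frame_of_type matC m_infty p_infty gamma2.
Proof.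
  intros [Z [F [p [P [x1 [x2 [x3 [_ [_ [_ EQ]]]]]]]]]].
  assert (P0 : p 0%nat = 0%nat) by (destruct P; auto).
  assert (ZT : forall k t, (k < 4)%nat -> Z (p 0%nat) k t = T2 k t).
  { intros k t Hk; rewrite P0; apply (frame_T0 T2 Z k sm_T2 F Hk). }
  assert (DT : forall k t, (k < 4)%nat -> Derive (T2 k) t = x1 t * Z (p 1%nat) k t + x2 t * Z (p 2%nat) k t).
  { intros k t Hk. rewrite <- (frame_dT0 T2 Z k t sm_T2 F Hk). rewrite <- P0 at 1.
    rewrite (EQ t (all_I t) 0%nat k ltac:(lia) Hk). unfold sum4, matC; simpl; ring. }
  assert (DW2 : forall k t, (k < 4)%nat -> Derive (Z (p 2%nat) k) t = - x2 t * T2 k t).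
  { intros k t Hk. rewrite (EQ t (all_I t) 2%nat k ltac:(lia) Hk). unfold sum4, matC; simpl.
    rewrite ZT by lia. ring. }
  assert (OA : forall i t, (i = 2 \/ i = 3)%nat -> sum4 (fun k => Z (p i) k t * T2 k t) = 0).
  { intros i t Hi. assert (O := frame_ortho _ _ _ Z p i 0 t F P (all_I t) ltac:(lia) ltac:(lia)).
    destruct Hi as [-> | ->]; simpl in O; rewrite <- O; unfold sum4; rewrite !ZT by lia; reflexivity. }
  assert (OB : forall t, sum4 (fun k => Z (p 3%nat) k t * Derive (T2 k) t) = 0).
  { intros t. unfold sum4. rewrite !DT by lia.
    assert (O1 := frame_ortho _ _ _ Z p 3 1 t F P (all_I t) ltac:(lia) ltac:(lia)).
    assert (O2 := frame_ortho _ _ _ Z p 3 2 t F P (all_I t) ltac:(lia) ltac:(lia)).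
    simpl in O1, O2; unfold sum4 in O1, O2.
    replace 0 with (x1 t * 0 + x2 t * 0) by ring. rewrite <- O1 at 1. rewrite <- O2. ring. }
  set (W := fun i k t => Z (p i) k t).
  assert (Sg : forall t m a d, (m = 1 \/ m = 2 \/ m = 3)%nat ->
     (forall k, (k < 4)%nat -> T2 k t = v4 (cos a) (if Nat.eqb m 1 then sin a else 0) (if Nat.eqb m 2 then sin a else 0) (if Nat.eqb m 3 then sin a else 0) k) ->
     (forall k, (k < 4)%nat -> Derive (T2 k) t = v4 (- sin a * d) (if Nat.eqb m 1 then cos a * d else 0) (if Nat.eqb m 2 then cos a * d else 0) (if Nat.eqb m 3 then cos a * d else 0) k) ->
     d <> 0 -> Z (p 3%nat) m t = 0).
  { intros t m a d Hm HT HD Hd. assert (A := OA 3%nat t ltac:(lia)). assert (B := OB t).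
    unfold sum4 in A, B. rewrite !HT in A by lia. rewrite !HD in B by lia.
    apply (plane_lemma (Z (p 3%nat) 0%nat t) _ (cos a) (sin a) d). apply sc_id. auto.
    destruct Hm as [-> | [-> | ->]]; simpl in A |- *; lra.
    destruct Hm as [-> | [-> | ->]]; simpl in B |- *; lra. }
  assert (S1 : forall t, -1 < t < 0 -> Z (p 3%nat) 1%nat t = 0).
  { intros t Ht. destruct (reg1 t ltac:(lra)) as [E1 [E2 [E3 [E4 [E5 E6]]]]].
    destruct (dT2 t) as [d0 [d1 [d2 d3]]].
    apply (Sg t 1%nat (th1 t) (dth1 t)). lia.
    intros k Hk; unfold T2; rewrite E3, E5, sin_0, cos_0; destruct k as [|[|[|[|k]]]]; simpl; ring.
    intros k Hk; destruct k as [|[|[|[|k]]]]; try lia; cbn [v4 Nat.eqb]; rewrite ?d0, ?d1, ?d2, ?d3, ?E3, ?E4, ?E5, ?E6, ?sin_0, ?cos_0; ring.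
    rewrite E2. assert (0 < h 2 (-1*t+0)) by (apply h_pos; lra). lra. }
  assert (S4 : forall t, 2 < t < 3 -> Z (p 3%nat) 1%nat t = 0).
  { intros t Ht. destruct (reg4 t ltac:(lra)) as [E1 [E2 [E3 [E4 [E5 E6]]]]].
    destruct (dT2 t) as [d0 [d1 [d2 d3]]].
    apply (Sg t 1%nat (th1 t) (dth1 t)). lia.
    intros k Hk; unfold T2; rewrite E3, E5, sin_0, cos_0; destruct k as [|[|[|[|k]]]]; simpl; ring.
    intros k Hk; destruct k as [|[|[|[|k]]]]; try lia; cbn [v4 Nat.eqb]; rewrite ?d0, ?d1, ?d2, ?d3, ?E3, ?E4, ?E5, ?E6, ?sin_0, ?cos_0; ring.
    rewrite E2. assert (0 < h 2 (1*t+ -2)) by (apply h_pos; lra). lra. }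
  assert (S2 : forall t, 0 < t < 1 -> t <> 1/2 -> Z (p 3%nat) 2%nat t = 0).
  { intros t Ht Hne. destruct (reg2 t ltac:(lra)) as [E1 [E2 [E3 E4]]].
    destruct (dT2 t) as [d0 [d1 [d2 d3]]].
    apply (Sg t 2%nat (thB t) (dthB t)). lia.
    intros k Hk; unfold T2; rewrite E1, E3, sin_0, cos_0; destruct k as [|[|[|[|k]]]]; simpl; ring.
    intros k Hk; destruct k as [|[|[|[|k]]]]; try lia; cbn [v4 Nat.eqb]; rewrite ?d0, ?d1, ?d2, ?d3, ?E1, ?E2, ?E3, ?E4, ?sin_0, ?cos_0; ring.
    unfold dthB. apply bump_nz; lra. }
  assert (S3 : forall t, 1 < t < 2 -> t <> 3/2 -> Z (p 3%nat) 3%nat t = 0).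
  { intros t Ht Hne. destruct (reg3 t ltac:(lra)) as [E1 [E2 [E3 E4]]].
    destruct (dT2 t) as [d0 [d1 [d2 d3]]].
    apply (Sg t 3%nat (thC t) (dthC t)). lia.
    intros k Hk; unfold T2; rewrite E1, E3, sin_0, cos_0; destruct k as [|[|[|[|k]]]]; simpl; ring.
    intros k Hk; destruct k as [|[|[|[|k]]]]; try lia; cbn [v4 Nat.eqb]; rewrite ?d0, ?d1, ?d2, ?d3, ?E1, ?E2, ?E3, ?E4, ?sin_0, ?cos_0; ring.
    unfold dthC. apply bump_nz; lra. }
  assert (CT : forall i k t, (i <= 3)%nat -> (k < 4)%nat -> continuous (Z (p i) k) t).
  { intros i k t Hi Hk. apply (frame_cont _ _ gamma2 Z p i k t F P (all_I t)); auto. }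
  assert (J0 : forall i t, (i = 2 \/ i = 3)%nat -> (t = 0 \/ t = 1 \/ t = 2) -> Z (p i) 0%nat t = 0).
  { intros i t Hi Ht. assert (A := OA i t Hi). unfold sum4 in A. rewrite !(T2_junc t Ht) in A.
    simpl in A. lra. }
  assert (a1 : Z (p 3%nat) 1%nat 0 = 0).
  { apply (cont_zero_side _ 0 (-1) 0). apply CT; lia. lra. auto. intros; apply S1; auto. }
  assert (a2 : Z (p 3%nat) 2%nat 0 = 0).
  { apply (cont_zero_side _ 0 0 (1/2)). apply CT; lia. lra. auto. intros; apply S2; lra. }
  assert (a0 := J0 3%nat 0 ltac:(lia) ltac:(lra)).
  assert (b0 := J0 2%nat 0 ltac:(lia) ltac:(lra)).
  assert (N33 := frame_ortho _ _ _ Z p 3 3 0 F P (all_I 0) ltac:(lia) ltac:(lia)).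
  assert (N23 := frame_ortho _ _ _ Z p 2 3 0 F P (all_I 0) ltac:(lia) ltac:(lia)).
  simpl in N33, N23. unfold sum4 in N33, N23. rewrite a0, a1, a2 in N33, N23.
  assert (w23_0 : Z (p 2%nat) 3%nat 0 = 0) by nra.
  assert (c2 : Z (p 3%nat) 2%nat 1 = 0).
  { apply (cont_zero_side _ 1 (1/2) 1). apply CT; lia. lra. auto. intros; apply S2; lra. }
  assert (c3 : Z (p 3%nat) 3%nat 1 = 0).
  { apply (cont_zero_side _ 1 1 (3/2)). apply CT; lia. lra. auto. intros; apply S3; lra. }
  assert (c0 := J0 3%nat 1 ltac:(lia) ltac:(lra)).
  assert (M33 := frame_ortho _ _ _ Z p 3 3 1 F P (all_I 1) ltac:(lia) ltac:(lia)).
  assert (M23 := frame_ortho _ _ _ Z p 2 3 1 F P (all_I 1) ltac:(lia) ltac:(lia)).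
  simpl in M33, M23. unfold sum4 in M33, M23. rewrite c0, c2, c3 in M33, M23.
  assert (w21_1 : Z (p 2%nat) 1%nat 1 = 0) by nra.
  assert (e3 : Z (p 3%nat) 3%nat 2 = 0).
  { apply (cont_zero_side _ 2 (3/2) 2). apply CT; lia. lra. auto. intros; apply S3; lra. }
  assert (e1 : Z (p 3%nat) 1%nat 2 = 0).
  { apply (cont_zero_side _ 2 2 3). apply CT; lia. lra. auto. intros; apply S4; lra. }
  assert (e0 := J0 3%nat 2 ltac:(lia) ltac:(lra)).
  assert (K33 := frame_ortho _ _ _ Z p 3 3 2 F P (all_I 2) ltac:(lia) ltac:(lia)).
  assert (K23 := frame_ortho _ _ _ Z p 2 3 2 F P (all_I 2) ltac:(lia) ltac:(lia)).
  simpl in K33, K23. unfold sum4 in K33, K23. rewrite e0, e1, e3 in K33, K23.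
  assert (w22_2 : Z (p 2%nat) 2%nat 2 = 0) by nra.
  assert (EXD : forall k x, (k < 4)%nat -> ex_derive (Z (p 2%nat) k) x).
  { intros k x Hk. destruct F as [Sm _]. apply (Sm (p 2%nat) k (perm_lt4 p 2 P ltac:(lia)) Hk 1%nat x (all_I x)). }
  assert (w23_1 : Z (p 2%nat) 3%nat 1 = 0).
  { rewrite <- w23_0. symmetry. apply const_on. lra. intros; apply EXD; lia.
    intros x Hx. rewrite DW2 by lia. unfold T2, v4.
    assert (thC x = 0). { destruct (Rle_or_lt x 0). apply (reg1 x); auto. apply (reg2 x); lra. }
    rewrite H, sin_0; ring. }
  assert (w22_1 : Z (p 2%nat) 2%nat 1 = 0).
  { rewrite <- w22_2. apply const_on. lra. intros; apply EXD; lia.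
    intros x Hx. rewrite DW2 by lia. unfold T2, v4.
    assert (thB x = 0) by (apply (reg3 x); lra).
    rewrite H, sin_0; ring. }
  assert (w20_1 := J0 2%nat 1 ltac:(lia) ltac:(lra)).
  assert (L22 := frame_ortho _ _ _ Z p 2 2 1 F P (all_I 1) ltac:(lia) ltac:(lia)).
  simpl in L22. unfold sum4 in L22. rewrite w20_1, w21_1, w22_1, w23_1 in L22. lra.
Qed.

Theorem theorem1 :
  (exists (a b : Rbar) (gamma : curve),
     Rbar_lt a b /\ unit_speed_curve a b gamma /\
     admits_frame_of_type matC a b gamma /\
     ~ admits_frame_of_type matD a b gamma) /\
  (exists (a b : Rbar) (gamma : curve),
     Rbar_lt a b /\ unit_speed_curve a b gamma /\
     ~ admits_frame_of_type matC a b gamma).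
Proof.
  split.
  - exists m_infty, p_infty, gamma1. split. simpl; auto.
    split. apply gamma1_unit. split. apply part1_admits. apply part1_notD.
  - exists m_infty, p_infty, gamma2. split. simpl; auto.
    split. apply gamma2_unit. apply part2_notC.
Qed.
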